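(* Let $F:\mathbb{R}^d\to\mathbb{R}^d$ be $L$-Lipschitz, $G:\mathbb{R}^d\rightrightarrows\mathbb{R}^d$ maximally monotone, the solution set of $0\in F(x)+G(x)$ nonempty, $F+G$ maximally $\rho$-cohypomonotone with $\rho>0$, and $\eta>\rho$. Let $\alpha=1-\frac\rho\eta$, $\beta_k=\frac1{k+2}$, $R=\mathrm{Id}-J_{\eta(F+G)}$, $x^\star$ a solution, and let $(x_k)$ be random iterates with $x_{k+1}=\beta_kx_0+(1-\beta_k)((1-\alpha)x_k+\alpha\widetilde J_{\eta(F+G)}(x_k))$, where $\mathbb{E}_k\|\widetilde J_{\eta(F+G)}(x_k)-J_{\eta(F+G)}(x_k)\|^2\le\varepsilon_k^2$. Then for any $\gamma>0$ and $K\ge1$, $$\frac{\alpha K(K+1)}4\mathbb{E}\|R(x_K)\|^2\le\frac{K+1}{K\alpha}\|x^\star-x_0\|^2+\sum_{k=0}^{K-1}\left(\frac{\alpha(\gamma+1)}{2\gamma}(k+1)(k+2)\mathbb{E}[\varepsilon_k^2]+\frac{\gamma\alpha\,\mathbb{E}\|R(x_k)\|^2}2\right).$$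
   Context: For an operator $A$, $J_A=(\mathrm{Id}+A)^{-1}$. $F+G$ is $\rho$-cohypomonotone if $\langle u-v,x-y\rangle\ge-\rho\|u-v\|^2$ for all $(x,u),(y,v)$ in its graph; maximal means its graph is not strictly contained in that of another $\rho$-cohypomonotone operator. $\mathbb{E}_k$ is expectation conditioned on the randomness of $x_1,\dots,x_k$; $\varepsilon_k$ may be random and measurable with respect to that conditioning. *)

(* Defs.v *)
From HB Require Import structures.
From mathcomp Require Import all_boot all_order all_algebra.
From mathcomp Require Import all_classical all_reals all_analysis.
Set Implicit Arguments. Unset Strict Implicit. Unset Printing Implicit Defensive.
Import Order.TTheory GRing.Theory Num.Theory.
Local Open Scope ring_scope.
Local Open Scope classical_set_scope.

Section Defs.
Variables (R : realType) (d : nat).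
Local Notation V := 'rV[R]_d.

Definition edot (u v : V) : R := \sum_(i < d) u ord0 i * v ord0 i.
Definition enorm (u : V) : R := Num.sqrt (edot u u).

Definition e_lipschitz (L : R) (F : V -> V) : Prop :=
  forall x y, enorm (F x - F y) <= L * enorm (x - y).

Definition graph_sub (A B : V -> set V) : Prop := forall x, A x `<=` B x.

Definition monotone_op (A : V -> set V) : Prop :=
  forall x y u v, A x u -> A y v -> 0 <= edot (u - v) (x - y).

Definition max_monotone (A : V -> set V) : Prop :=
  monotone_op A /\
  forall B, monotone_op B -> graph_sub A B -> graph_sub B A.

Definition cohypomonotone (rho : R) (A : V -> set V) : Prop :=
  forall x y u v, A x u -> A y v ->
    - rho * edot (u - v) (u - v) <= edot (u - v) (x - y).

Definition max_cohypomonotone (rho : R) (A : V -> set V) : Prop :=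
  cohypomonotone rho A /\
  forall B, cohypomonotone rho B -> graph_sub A B -> graph_sub B A.

Definition op_add (F : V -> V) (G : V -> set V) : V -> set V :=
  fun x => [set F x + u | u in G x].

(* y is in J_{eta A}(x) = (Id + eta A)^{-1}(x), i.e. x ∈ y + eta A(y). *)
Definition in_resolvent (eta : R) (A : V -> set V) (x y : V) : Prop :=
  exists u, A y u /\ x = y + eta *: u.

End Defs.

Section Prob.
Variables (R : realType) (dT : measure_display) (T : measurableType dT)
  (P : probability T R).

Definition gen_filtration (d : nat) (X : nat -> T -> 'rV[R]_d) (k : nat)
  : set (set T) :=
  <<s [set A | exists i j (B : set R),
          (i <= k)%N /\ measurable B /\ A = (fun w => X i w ord0 j) @^-1` B] >>.

Definition measurable_wrt (Fk : set (set T)) (Y : T -> R) : Prop :=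
  forall B : set R, measurable B -> Fk (Y @^-1` B).

(* E[ Z | Fk ] <= Y almost surely, for Z >= 0 and Y Fk-measurable, stated via
   the defining property of conditional expectation:
   for every A in Fk, E[Z 1_A] <= E[Y 1_A]. *)
Definition cond_exp_le (Fk : set (set T)) (Z Y : T -> R) : Prop :=
  forall A, Fk A ->
    (\int[P]_(w in A) (Z w)%:E <= \int[P]_(w in A) (Y w)%:E)%E.

End Prob.

(* Main.v *)
Require Import Defs.
From HB Require Import structures.
From mathcomp Require Import all_boot all_order all_algebra.
From mathcomp Require Import all_classical all_reals all_analysis.
From mathcomp Require Import ring lra.
Import Order.TTheory GRing.Theory Num.Theory.
Local Open Scope ring_scope.
Local Open Scope classical_set_scope.
Set Implicit Arguments. Unset Strict Implicit.

Section Vec.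
Variables (R : realType) (d : nat).
Local Notation V := 'rV[R]_d.

Lemma edotDl (u v w : V) : edot (u + v) w = edot u w + edot v w.
Proof. by rewrite /edot -big_split; apply: eq_bigr => i _; rewrite mxE mulrDl. Qed.
Lemma edotC (u v : V) : edot u v = edot v u.
Proof. by rewrite /edot; apply: eq_bigr => i _; rewrite mulrC. Qed.
Lemma edotDr (u v w : V) : edot w (u + v) = edot w u + edot w v.
Proof. by rewrite edotC edotDl !(edotC w). Qed.
Lemma edotZl (c : R) (u w : V) : edot (c *: u) w = c * edot u w.
Proof. by rewrite /edot mulr_sumr; apply: eq_bigr => i _; rewrite mxE mulrA. Qed.
Lemma edotZr (c : R) (u w : V) : edot w (c *: u) = c * edot w u.
Proof. by rewrite edotC edotZl edotC. Qed.
Lemma edotNl (u w : V) : edot (- u) w = - edot u w.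
Proof. by rewrite -scaleN1r edotZl mulN1r. Qed.
Lemma edotNr (u w : V) : edot w (- u) = - edot w u.
Proof. by rewrite edotC edotNl edotC. Qed.
Lemma edot_ge0 (u : V) : 0 <= edot u u.
Proof. by rewrite /edot; apply: sumr_ge0 => i _; rewrite -expr2 sqr_ge0. Qed.
Lemma enorm_sq (u : V) : enorm u ^+ 2 = edot u u.
Proof. by rewrite /enorm sqr_sqrtr // edot_ge0. Qed.



Ltac ex := rewrite ?(edotDl, edotDr, edotNl, edotNr, edotZl, edotZr).

Lemma step (al a g : R) (y y' r t e : V) :
  0 < al -> 0 <= a -> 0 < g ->
  y' = (a / (a + 1)) *: (y - al *: r + al *: e) ->
  al * edot (t - r) (t - r) <= edot (y' - y) (t - r) ->
  (a + 1) * a / 2 * al * edot t t + (a + 1) * edot y' t <=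
  (a - 1) * a / 2 * al * edot r r + a * edot y r +
  (al * (g + 1) / (2 * g) * (a * (a + 1)) * edot e e + g * al / 2 * edot r r).
Proof.
move=> al0 a0 g0 -> HC.
have a1 : a + 1 != 0 by rewrite gt_eqF // ltr_wpDl.
have g1 : g != 0 by rewrite gt_eqF.
rewrite -subr_ge0.
have -> : (a - 1) * a / 2 * al * edot r r + a * edot y r +
  (al * (g + 1) / (2 * g) * (a * (a + 1)) * edot e e + g * al / 2 * edot r r) -
  ((a + 1) * a / 2 * al * edot t t + (a + 1) * edot (a / (a + 1) *: (y - al *: r + al *: e)) t)
  = (a * (a + 1)) * (edot (a / (a + 1) *: (y - al *: r + al *: e) - y) (t - r) - al * edot (t - r) (t - r)) +
    al * ((a * (a + 1) / 2) * edot (t - r - e) (t - r - e)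
          + (2 * g)^-1 * edot (g *: r - a *: e) (g *: r - a *: e)
          + (a / (2 * g)) * edot e e).
  ex.
  rewrite ?(edotC t r) ?(edotC t e) ?(edotC r e) ?(edotC t y) ?(edotC r y) ?(edotC e y).
  field; apply/andP; split => //.
apply: addr_ge0.
  apply: mulr_ge0; first by apply: mulr_ge0 => //; apply: addr_ge0.
  by rewrite subr_ge0.
apply: mulr_ge0; first exact: ltW.
apply: addr_ge0; first apply: addr_ge0.
- apply: mulr_ge0; last exact: edot_ge0.
  by apply: mulr_ge0 => //; apply: mulr_ge0 => //; apply: addr_ge0.
- by apply: mulr_ge0; [rewrite invr_ge0 mulr_ge0 // ltW | exact: edot_ge0].
- by apply: mulr_ge0; [apply: divr_ge0 => //; rewrite mulr_ge0 // ltW | exact: edot_ge0].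
Qed.


Lemma edot0l (u : V) : edot 0 u = 0.
Proof. by rewrite -(scale0r (0 : V)) edotZl mul0r. Qed.

Lemma coco_gen (rho eta : R) (z1 z2 p1 p2 u1 u2 : V) :
  0 < rho -> rho < eta ->
  z1 = p1 + eta *: u1 -> z2 = p2 + eta *: u2 ->
  - rho * edot (u1 - u2) (u1 - u2) <= edot (u1 - u2) (p1 - p2) ->
  (1 - rho / eta) * edot ((z1 - p1) - (z2 - p2)) ((z1 - p1) - (z2 - p2))
    <= edot (z1 - z2) ((z1 - p1) - (z2 - p2)).
Proof.
move=> r0 re -> -> H.
have e0 : 0 < eta by apply: lt_trans re.
have E1 : (p1 + eta *: u1 - p1) - (p2 + eta *: u2 - p2) = eta *: (u1 - u2).
  by apply/rowP => i; rewrite !mxE; ring.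
have E2 : p1 + eta *: u1 - (p2 + eta *: u2) = (p1 - p2) + eta *: (u1 - u2).
  by apply/rowP => i; rewrite !mxE; ring.
rewrite E1 E2 edotDl !edotZl !edotZr (edotC (p1 - p2)).
set uu := edot (u1 - u2) (u1 - u2); set up := edot (u1 - u2) (p1 - p2).
have -> : (1 - rho / eta) * (eta * (eta * uu)) = eta * eta * uu - eta * (rho * uu).
  by field; rewrite gt_eqF.
rewrite -subr_ge0.
have -> : eta * up + eta * (eta * uu) - (eta * eta * uu - eta * (rho * uu))
  = eta * (up - (- rho * uu)) by ring.
by apply: mulr_ge0; [exact: ltW | rewrite subr_ge0].
Qed.

Lemma lip_gen (al : R) (z r : V) : 0 < al -> al * edot r r <= edot z r ->
  edot (z - r) (z - r) <= (1 + al^-1 ^+ 2) * edot z z.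
Proof.
move=> a0 H.
have rr := edot_ge0 r.
have zr : 0 <= edot z r by apply: le_trans H; apply: mulr_ge0 => //; exact: ltW.
have S := edot_ge0 (al^-1 *: z - r).
move: S; ex; rewrite (edotC r z) => S.
rewrite -subr_ge0.
have -> : (1 + al^-1 ^+ 2) * edot z z -
  (edot z z + - edot z r + (- edot z r + - - edot r r)) =
  (al^-1 * (al^-1 * edot z z) + - (al^-1 * edot z r) + (- (al^-1 * edot z r) + - - edot r r))
  + 2 * al^-1 * (edot z r - al * edot r r) + 2 * edot z r.
  by field; rewrite gt_eqF.
apply: addr_ge0; last by apply: mulr_ge0.
have h1 : 0 <= 2 / al * (edot z r - al * edot r r).
  by apply: mulr_ge0; [apply: divr_ge0 => //; exact: ltW | rewrite subr_ge0].
lra.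
Qed.

Lemma fin_gen (al K : R) (z w y r : V) : 0 < al -> 0 < K -> y = z + w ->
  al * edot r r <= edot z r ->
  al * (K * (K + 1)) / 4 * edot r r <=
  (K + 1) / (K * al) * edot w w + (K * (K + 1) / 2 * al * edot r r + (K + 1) * edot y r).
Proof.
move=> a0 K0 -> H.
have S := edot_ge0 (w + (K * al / 2) *: r).
rewrite ?(edotDl, edotDr, edotNl, edotNr, edotZl, edotZr) (edotC r w) in S.
have rr := edot_ge0 r.
rewrite -subr_ge0.
have -> : (K + 1) / (K * al) * edot w w + (K * (K + 1) / 2 * al * edot r r + (K + 1) * edot (z + w) r) -
   al * (K * (K + 1)) / 4 * edot r r =
   (K + 1) / (K * al) * (edot w w + K * al / 2 * edot w r + (K * al / 2 * edot w r + K * al / 2 * (K * al / 2 * edot r r)))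
   + (K + 1) * (edot z r - al * edot r r) + (K + 1) * al * edot r r.
  by ex; field; rewrite !gt_eqF.
have K1 : 0 <= K + 1 by rewrite addr_ge0 // ltW.
have c1 : 0 <= (K + 1) / (K * al).
  by apply: divr_ge0 => //; apply: mulr_ge0; exact: ltW.
have t1 := mulr_ge0 c1 S.
have t2 : 0 <= (K + 1) * (edot z r - al * edot r r).
  by apply: mulr_ge0 => //; rewrite subr_ge0.
have t3 : 0 <= (K + 1) * al * edot r r.
  by apply: mulr_ge0 => //; apply: mulr_ge0 => //; exact: ltW.
lra.
Qed.

End Vec.

Section Meas.
Variables (R : realType) (d : nat) (dT : measure_display) (T : measurableType dT).
Local Notation V := 'rV[R]_d.

Lemma meas_floor_eq (f : T -> R) (z : int) : measurable_fun setT f ->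
  measurable [set w | Num.floor (f w) = z].
Proof.
move=> mf.
have -> : [set w | Num.floor (f w) = z] =
   setT `&` f @^-1` [set` Interval (BLeft (z%:~R : R)) (BLeft (z + 1)%:~R)].
  apply/seteqP; split => w /=.
    by move=> <-; split => //; rewrite in_itv /= -floor_eq.
  by move=> [_]; rewrite in_itv /= -floor_eq => /eqP.
exact: mf measurableT _ (measurable_itv _).
Qed.

Lemma floor_approx (c x : R) : 0 < c ->
  (x - (Num.floor (c * x))%:~R / c) ^+ 2 <= c^-1 ^+ 2.
Proof.
move=> c0; have := floor_itv (c * x); rewrite intrD /=.
set f := (Num.floor (c * x))%:~R => /andP[h1 h2].
have -> : x - f / c = (c * x - f) / c by field; rewrite gt_eqF.
rewrite expr_div_n exprVn -[X in _ <= X]mul1r; apply: ler_wpM2r.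
  by rewrite invr_ge0 exprn_ge0 // ltW.
have : 0 <= c * x - f <= 1 by apply/andP; split; lra.
move=> /andP[u1 u2]; rewrite expr2; nra.
Qed.


Lemma edot_coord (u : V) (j : 'I_d) : (u ord0 j) ^+ 2 <= edot u u.
Proof.
rewrite /edot (bigD1 j) //= -expr2 lerDl; apply: sumr_ge0 => i _.
by rewrite -expr2 sqr_ge0.
Qed.

Lemma meas_lip (h : V -> V) (M : R) (X : T -> V) (j : 'I_d) :
  0 <= M ->
  (forall a b, edot (h a - h b) (h a - h b) <= M * edot (a - b) (a - b)) ->
  (forall i, measurable_fun setT (fun w => X w ord0 i)) ->
  measurable_fun setT (fun w => h (X w) ord0 j).
Proof.
move=> M0 hL mX.
pose c (n : nat) : R := n.+1%:R.
have c0 n : 0 < c n by rewrite /c ltr0n.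
pose vec n (v : 'rV[int]_d) : V := \row_i ((v ord0 i)%:~R / c n).
pose fl n w : 'rV[int]_d := \row_i Num.floor (c n * X w ord0 i).
pose Xn n w := vec n (fl n w).
apply: (@measurable_realfun.measurable_fun_cvg _ _ _ _ (fun n w => h (Xn n w) ord0 j)).
- move=> n _ Y mY.
  pose piece (m : nat) : set T := if @unpickle 'rV[int]_d m is Some v then
     [set w | Y (h (vec n v) ord0 j) /\ fl n w = v] else set0.
  have -> : setT `&` (fun w => h (Xn n w) ord0 j) @^-1` Y = \bigcup_m piece m.
    apply/seteqP; split => w /=.
      by move=> [_ Yw]; exists (pickle (fl n w)) => //; rewrite /piece pickleK.
    move=> [m _]; rewrite /piece; case: unpickle => [v|] // [Yv flv].
    by split => //; rewrite /Xn flv.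
  apply: bigcupT_measurable => m; rewrite /piece; case: unpickle => [v|] //.
  have [Yv|nYv] := pselect (Y (h (vec n v) ord0 j)).
  + have -> : [set w | Y (h (vec n v) ord0 j) /\ fl n w = v] =
        \bigcap_(i in setT) [set w | Num.floor (c n * X w ord0 i) = v ord0 i].
      apply/seteqP; split => w /=.
        by move=> [_ <-] i _; rewrite mxE.
      move=> H; split => //; apply/rowP => i; rewrite mxE (H i) //.
    apply: (@fin_bigcap_measurable _ _ _ setT (fun i => [set w | Num.floor (c n * X w ord0 i) = v ord0 i])); first exact: finite_finset.
    move=> i _; apply: meas_floor_eq; apply: measurable_realfun.measurable_funM => //.
  + by rewrite (_ : [set w | _ /\ _] = set0) //; apply/seteqP; split => w //= [].
- move=> w _; apply/cvgrPdist_le => eps eps0.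
  pose B := M * d%:R + 1.
  have B0 : 0 < B by rewrite /B ltr_wpDl // mulr_ge0.
  have bnd n : `|h (X w) ord0 j - h (Xn n w) ord0 j| <= B * (c n)^-1.
    have H3 : edot (X w - Xn n w) (X w - Xn n w) <= d%:R * (c n)^-1 ^+ 2.
      rewrite /edot (eq_bigr (fun i => (X w ord0 i - (Num.floor (c n * X w ord0 i))%:~R / c n) ^+ 2)); last first.
        by move=> i _; rewrite !mxE expr2.
      apply: le_trans (_ : \sum_(i < d) (c n)^-1 ^+ 2 <= _).
        by apply: ler_sum => i _; apply: floor_approx.
      by rewrite sumr_const card_ord mulr_natl.
    have H1 := edot_coord (h (X w) - h (Xn n w)) j.
    rewrite !mxE in H1.
    have H2 := hL (X w) (Xn n w).
    have H4 : `|h (X w) ord0 j - h (Xn n w) ord0 j| ^+ 2 <= (B * (c n)^-1) ^+ 2.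
      rewrite real_normK ?num_real // (le_trans H1) // (le_trans H2) //.
      rewrite exprMn; set q := (c n)^-1 ^+ 2.
      have q0 : 0 <= q by rewrite /q exprn_ge0 // invr_ge0 ltW.
      have dd : 0 <= d%:R :> R by [].
      apply: le_trans (_ : M * (d%:R * q) <= _); first by apply: ler_wpM2l.
      rewrite mulrA; apply: ler_wpM2r => //; rewrite /B; nra.
    rewrite -ler_sqr // ?nnegrE //; apply: mulr_ge0; first exact: ltW.
    by rewrite invr_ge0 ltW.
  have eB : 0 < eps / B by apply: divr_gt0.
  apply: (filterS _ (near_infty_natSinv_lt (PosNum eB))) => n /= Hn.
  apply: (le_trans (bnd n)).
  rewrite /c; have := ltW Hn; rewrite -(ler_pM2l B0) mulrCA divff ?mulr1 //.
  by rewrite gt_eqF.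
Qed.

End Meas.

Unset Implicit Arguments.

Theorem lemmaC3 (R : realType) (d : nat)
  (F : 'rV[R]_d -> 'rV[R]_d) (G : 'rV[R]_d -> set 'rV[R]_d) (L rho eta : R)
  (J : 'rV[R]_d -> 'rV[R]_d) (xstar x0 : 'rV[R]_d)
  (dT : measure_display) (T : measurableType dT) (P : probability T R)
  (x Jt : nat -> T -> 'rV[R]_d) (eps : nat -> T -> R)
  (gamma : R) (K : nat) :
  e_lipschitz L F ->
  max_monotone G ->
  max_cohypomonotone rho (op_add F G) ->
  0 < rho -> rho < eta ->
  (* J = J_{eta(F+G)} (single-valued, full domain under the hypotheses) *)
  (forall z, in_resolvent eta (op_add F G) z (J z)) ->
  (* x* is a solution of 0 ∈ F(x) + G(x) *)
  op_add F G xstar 0 ->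
  (* the stochastic approximations of the resolvent are random vectors *)
  (forall k (j : 'I_d), measurable_fun setT (fun w => Jt k w ord0 j)) ->
  (forall w, x 0%N w = x0) ->
  (forall k w, x k.+1 w =
     (k.+2%:R)^-1 *: x0 + (1 - (k.+2%:R)^-1) *:
       ((1 - (1 - rho / eta)) *: x k w + (1 - rho / eta) *: Jt k w)) ->
  (forall k, measurable_wrt (gen_filtration x k) (eps k)) ->
  (forall k, cond_exp_le P (gen_filtration x k)
      (fun w => enorm (Jt k w - J (x k w)) ^+ 2) (fun w => eps k w ^+ 2)) ->
  0 < gamma -> (1 <= K)%N ->
  let alpha := 1 - rho / eta in
  let Rn := fun z => enorm (z - J z) ^+ 2 in
  (((alpha * (K%:R * (K.+1)%:R) / 4)%:E * \int[P]_w (Rn (x K w))%:E) <=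
   ((K.+1%:R / (K%:R * alpha) * enorm (xstar - x0) ^+ 2)%:E +
    \sum_(k < K)
      ((alpha * (gamma + 1) / (2 * gamma) * (k.+1%:R * k.+2%:R))%:E
         * \int[P]_w (eps k w ^+ 2)%:E
       + (gamma * alpha / 2)%:E * \int[P]_w (Rn (x k w))%:E)))%E.
Proof.
move=> hL hG hA rho0 rhoeta hJ hstar mJt hx0 hrec heps hce g0 K1.
cbv beta zeta.
set al := 1 - rho / eta.
have eta0 : 0 < eta by apply: lt_trans rhoeta.
have al0 : 0 < al by rewrite /al subr_gt0 ltr_pdivrMr // mul1r.
pose r z := z - J z.
have RnE z : enorm (z - J z) ^+ 2 = edot (r z) (r z) by rewrite enorm_sq.
have cocoJ z1 z2 : al * edot (r z1 - r z2) (r z1 - r z2) <= edot (z1 - z2) (r z1 - r z2).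
  have [u1 [A1 E1]] := hJ z1; have [u2 [A2 E2]] := hJ z2.
  have H := hA.1 _ _ _ _ A1 A2.
  exact: (coco_gen rho0 rhoeta E1 E2 H).
have cocostar z : al * edot (r z) (r z) <= edot (z - xstar) (r z).
  have [u1 [A1 E1]] := hJ z.
  have H := hA.1 _ _ _ _ A1 hstar.
  have E2 : xstar = xstar + eta *: (0 : 'rV[R]_d) by rewrite scaler0 addr0.
  have := coco_gen rho0 rhoeta E1 E2 H.
  by rewrite subrr subr0.
have lipJ a b : edot (J a - J b) (J a - J b) <= (1 + al^-1 ^+ 2) * edot (a - b) (a - b).
  have E : J a - J b = (a - b) - (r a - r b) by apply/rowP => i; rewrite /r !mxE; ring.
  rewrite E; apply: lip_gen => //; exact: cocoJ.
have M0 : 0 <= 1 + al^-1 ^+ 2 by rewrite addr_ge0 // exprn_ge0 // invr_ge0 ltW.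
have mx k i : measurable_fun setT (fun w => x k w ord0 i).
  elim: k i => [|k IH] i.
    rewrite (_ : (fun w => x 0%N w ord0 i) = cst (x0 ord0 i)); first exact: measurable_cst.
    by apply/funext => w; rewrite hx0.
  rewrite (_ : (fun w => _) = (fun w => (k.+2%:R)^-1 * x0 ord0 i + (1 - (k.+2%:R)^-1) *
     ((1 - (1 - rho / eta)) * x k w ord0 i + (1 - rho / eta) * Jt k w ord0 i))); last first.
    by apply/funext => w; rewrite hrec !mxE.
  apply: measurable_realfun.measurable_funD; first exact: measurable_cst.
  apply: measurable_realfun.measurable_funM; first exact: measurable_cst.
  apply: measurable_realfun.measurable_funD; apply: measurable_realfun.measurable_funM => //;
    exact: measurable_cst.
have mJx k i : measurable_fun setT (fun w => J (x k w) ord0 i).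
  exact: (@meas_lip _ _ _ _ J _ (x k) i M0 lipJ (mx k)).
have mRn k : measurable_fun setT (fun w => enorm (x k w - J (x k w)) ^+ 2).
  rewrite (_ : (fun w => _) = (fun w => \sum_(i < d) ((x k w ord0 i - J (x k w) ord0 i) *
      (x k w ord0 i - J (x k w) ord0 i)))); last first.
    by apply/funext => w; rewrite enorm_sq /edot; apply: eq_bigr => i _; rewrite !mxE.
  apply: measurable_sum => i; apply: measurable_realfun.measurable_funM;
    exact: measurable_realfun.measurable_funB.
have mEn k : measurable_fun setT (fun w => enorm (Jt k w - J (x k w)) ^+ 2).
  rewrite (_ : (fun w => _) = (fun w => \sum_(i < d) ((Jt k w ord0 i - J (x k w) ord0 i) *
      (Jt k w ord0 i - J (x k w) ord0 i)))); last first.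
    by apply/funext => w; rewrite enorm_sq /edot; apply: eq_bigr => i _; rewrite !mxE.
  apply: measurable_sum => i; apply: measurable_realfun.measurable_funM;
    exact: measurable_realfun.measurable_funB.
have pw w : al * (K%:R * K.+1%:R) / 4 * enorm (x K w - J (x K w)) ^+ 2 <=
   K.+1%:R / (K%:R * al) * enorm (xstar - x0) ^+ 2 +
   \sum_(k < K) (al * (gamma + 1) / (2 * gamma) * (k.+1%:R * k.+2%:R) *
       enorm (Jt k w - J (x k w)) ^+ 2 + gamma * al / 2 * enorm (x k w - J (x k w)) ^+ 2).
  pose Q (n : nat) := (n%:R * (n%:R + 1)) / 2 * al * edot (r (x n w)) (r (x n w)) +
     (n%:R + 1) * edot (x n w - x0) (r (x n w)).
  have stepQ k : Q k.+1 <= Q k + (al * (gamma + 1) / (2 * gamma) * (k.+1%:R * k.+2%:R) *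
       enorm (Jt k w - J (x k w)) ^+ 2 + gamma * al / 2 * enorm (x k w - J (x k w)) ^+ 2).
    have Hy : x k.+1 w - x0 = ((k%:R + 1) / (k%:R + 1 + 1)) *:
        (x k w - x0 - al *: r (x k w) + al *: (Jt k w - J (x k w))).
      apply/rowP => i; rewrite hrec /r !mxE -!natr1 /al.
      field; rewrite ?gt_eqF //; apply: ltr_wpDl => //; apply: addr_ge0 => //.
    have Hc : al * edot (r (x k.+1 w) - r (x k w)) (r (x k.+1 w) - r (x k w)) <=
        edot ((x k.+1 w - x0) - (x k w - x0)) (r (x k.+1 w) - r (x k w)).
      have -> : (x k.+1 w - x0) - (x k w - x0) = x k.+1 w - x k w.
        by apply/rowP => i; rewrite !mxE; ring.
      exact: cocoJ.
    have k0 : 0 <= k%:R + 1 :> R by apply: addr_ge0.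
    have := step al0 k0 g0 Hy Hc.
    rewrite /Q RnE enorm_sq -!natr1.
    lra.
  have telesc n : Q n <= Q 0%N + \sum_(k < n) (al * (gamma + 1) / (2 * gamma) * (k.+1%:R * k.+2%:R) *
       enorm (Jt k w - J (x k w)) ^+ 2 + gamma * al / 2 * enorm (x k w - J (x k w)) ^+ 2).
    elim: n => [|n IH]; first by rewrite big_ord0 addr0.
    rewrite big_ord_recr /= addrA; apply: le_trans (stepQ n) _.
    by rewrite lerD2r.
  have Q0 : Q 0%N = 0.
    by rewrite /Q hx0 subrr edot0l mulr0 addr0 !mul0r.
  have Eyzw : x K w - x0 = (x K w - xstar) + (xstar - x0).
    by apply/rowP => i; rewrite !mxE; ring.
  have K0 : 0 < K%:R :> R by rewrite ltr0n.
  have fin := fin_gen al0 K0 Eyzw (cocostar (x K w)).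
  have := telesc K; rewrite Q0 add0r /Q.
  move: fin; rewrite RnE enorm_sq -!natr1.
  lra.
have Hfilt k : gen_filtration x k setT.
  rewrite /gen_filtration; set GG := [set A | _].
  have [H0 HD _] := smallest_sigma_algebra setT GG.
  by have := HD set0 H0; rewrite setD0.
have int_eps k := hce k setT (Hfilt k).
pose f k w := enorm (x k w - J (x k w)) ^+ 2.
pose g k w := enorm (Jt k w - J (x k w)) ^+ 2.
pose a (k : nat) := al * (gamma + 1) / (2 * gamma) * (k.+1%:R * k.+2%:R).
pose b := gamma * al / 2.
pose C := K.+1%:R / (K%:R * al) * enorm (xstar - x0) ^+ 2.
pose cL := al * (K%:R * K.+1%:R) / 4.
have f0 k w : 0 <= f k w by rewrite /f sqr_ge0.
have g0' k w : 0 <= g k w by rewrite /g sqr_ge0.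
have a0 k : 0 <= a k.
  rewrite /a; apply: mulr_ge0; last by apply: mulr_ge0.
  apply: divr_ge0; first by apply: mulr_ge0; [exact: ltW | apply: addr_ge0 => //; exact: ltW].
  by apply: mulr_ge0 => //; exact: ltW.
have b0 : 0 <= b by rewrite /b; apply: divr_ge0 => //; apply: mulr_ge0; exact: ltW.
have C0 : 0 <= C.
  rewrite /C; apply: mulr_ge0; last exact: sqr_ge0.
  by apply: divr_ge0 => //; apply: mulr_ge0 => //; exact: ltW.
have cL0 : 0 <= cL by rewrite /cL; apply: divr_ge0 => //; apply: mulr_ge0 => //; exact: ltW.
have mf k : measurable_fun setT (f k) by exact: mRn.
have mg k : measurable_fun setT (g k) by exact: mEn.
have mterm k : measurable_fun setT (fun w => a k * g k w + b * f k w).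
  apply: measurable_realfun.measurable_funD; apply: measurable_realfun.measurable_funM => //;
    exact: measurable_cst.
apply: (@le_trans _ _ (C%:E + \sum_(k < K) ((a k)%:E * \int[P]_w (g k w)%:E +
                                            b%:E * \int[P]_w (f k w)%:E))%E); last first.
  apply: leeD2l; apply: lee_sum => k _; apply: leeD2r; apply: lee_wpmul2l.
    by rewrite lee_fin.
  exact: int_eps k.
have E : (\int[P]_w ((C + \sum_(k < K) (a k * g k w + b * f k w))%:E) =
   C%:E + \sum_(k < K) ((a k)%:E * \int[P]_w (g k w)%:E + b%:E * \int[P]_w (f k w)%:E))%E.
  have mS : measurable_fun setT (fun w => \sum_(k < K) (a k * g k w + b * f k w)).
    exact: measurable_sum.
  have mS' := (measurable_realfun.measurable_EFinP _ _).2 mS.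
  have nnS : forall w, setT w -> (0 <= (\sum_(k < K) (a k * g k w + b * f k w))%:E)%E.
    move=> w _; rewrite lee_fin; apply: sumr_ge0 => k _.
    by apply: addr_ge0; apply: mulr_ge0.
  have nnC : forall w : T, setT w -> (0 <= C%:E)%E by move=> w _; rewrite lee_fin.
  under eq_integral => w _ do rewrite EFinD.
  rewrite ge0_integralD //.
  rewrite integral_cst //.
  have H1 : forall m, m = 1%E -> (C%:E * m = C%:E)%E by move=> m ->; rewrite mule1.
  rewrite H1; last exact: probability_setT.
  congr (_ + _)%E.
  under eq_integral => w _ do rewrite -sumEFin.
  have mT k := (measurable_realfun.measurable_EFinP _ _).2 (mterm k).
  have mT' := fun n : 'I_K => mT n.
  have nnT : forall (n : 'I_K) w, setT w -> (0 <= (a n * g n w + b * f n w)%:E)%E.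
    by move=> n w _; rewrite lee_fin; apply: addr_ge0; apply: mulr_ge0.
  rewrite ge0_integral_sum //.
  apply: eq_bigr => k _.
  have mag := (measurable_realfun.measurable_EFinP _ _).2
     (measurable_realfun.measurable_funM (measurable_cst (a k)) (mg k)).
  have mbf := (measurable_realfun.measurable_EFinP _ _).2
     (measurable_realfun.measurable_funM (measurable_cst b) (mf k)).
  have nag : forall w, setT w -> (0 <= (a k * g k w)%:E)%E.
    by move=> w _; rewrite lee_fin mulr_ge0.
  have nbf : forall w, setT w -> (0 <= (b * f k w)%:E)%E.
    by move=> w _; rewrite lee_fin mulr_ge0.
  under eq_integral => w _ do rewrite EFinD.
  rewrite ge0_integralD //.
  have ng : forall w, setT w -> (0 <= (g k w)%:E)%E by move=> w _; rewrite lee_fin.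
  have nf : forall w, setT w -> (0 <= (f k w)%:E)%E by move=> w _; rewrite lee_fin.
  have mg' := (measurable_realfun.measurable_EFinP _ _).2 (mg k).
  have mf' := (measurable_realfun.measurable_EFinP _ _).2 (mf k).
  rewrite -(ge0_integralZl_EFin _ measurableT ng mg' (a0 k)).
  rewrite -(ge0_integralZl_EFin _ measurableT nf mf' b0).
  by congr (_ + _)%E; apply: eq_integral => w _; rewrite EFinM.
have nnK : forall w, setT w -> (0 <= (f K w)%:E)%E by move=> w _; rewrite lee_fin.
have mK := (measurable_realfun.measurable_EFinP _ _).2 (mf K).
rewrite -E -(ge0_integralZl_EFin _ measurableT nnK mK cL0).
under eq_integral => w _ do rewrite -EFinM.
have mR : measurable_fun setT (fun w => C + \sum_(k < K) (a k * g k w + b * f k w)).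
  apply: measurable_realfun.measurable_funD; first exact: measurable_cst.
  exact: measurable_sum.
have mR' := (measurable_realfun.measurable_EFinP _ _).2 mR.
have mL : measurable_fun setT (fun w => cL * f K w).
  by apply: measurable_realfun.measurable_funM => //; exact: measurable_cst.
have mL' := (measurable_realfun.measurable_EFinP _ _).2 mL.
have nnL : forall w, setT w -> (0 <= (cL * f K w)%:E)%E.
  by move=> w _; rewrite lee_fin mulr_ge0.
apply: ge0_le_integral => //.
by move=> w _; rewrite lee_fin; exact: pw.
Qed.
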